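(* Assume $a_1,\dots,a_N,c_1,c_2>0$ with $a_ia_j<1$, $a_ic_1<1$, $a_ic_2<1$ for all $i,j$, and additionally $c_1c_2<1$. For any down-right path $\mathcal P$ in the strip and any fixed $\lambda_1^{(0)}\in\mathbb Z$, the quantity $$Z_{\mathrm{Geo}}=\sum_{\lambda_i^{(j)}\in\mathbb Z,\,(i,j)\neq(1,0)}\mathrm{wt}^{\mathcal{GP}}(\boldsymbol\lambda)$$ (sum over $i\in\{1,2\}$, $0\le j\le N$, $(i,j)\ne(1,0)$) is finite and does not depend on the choice of $\mathcal P$ nor of $\lambda_1^{(0)}$.
   Context: Fix $N\ge1$; extend $a_{j+kN}=a_j$. The strip is $\{(n,m)\in\mathbb Z^2:0\le m\le n\le m+N\}$. A down-right path is a sequence of vertices $\mathbf p_0,\dots,\mathbf p_N$ of the strip with $\mathbf p_0=(m_0,m_0)$ and each step $\mathbf p_j-\mathbf p_{j-1}\in\{(1,0),(0,-1)\}$ (so $\mathbf p_N$ is of the form $(m+N,m)$). Its edge $\mathsf e_j$ from $\mathbf p_{j-1}$ to $\mathbf p_j$ carries the label $\ell_j$: a horizontal edge $(n-1,m)\to(n,m)$ is labelled $a_n$, a vertical edge between $(n,m-1)$ and $(n,m)$ is labelled $a_m$. For $1\le j\le N$ set $(\mathrm{up}(j),\mathrm{low}(j))=(j,j-1)$ if $\mathsf e_j$ is horizontal and $(j-1,j)$ if $\mathsf e_j$ is vertical. For $\boldsymbol\lambda=(\lambda_i^{(j)})_{i\in\{1,2\},0\le j\le N}\in\mathbb Z^{2N+2}$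 define the two-layer Gibbs weight $$\mathrm{wt}^{\mathcal{GP}}(\boldsymbol\lambda)=c_1^{\lambda_1^{(0)}-\lambda_2^{(0)}}c_2^{\lambda_1^{(N)}-\lambda_2^{(N)}}\prod_{j=1}^N\Big[\prod_{i=1}^2\ell_j^{\lambda_i^{(\mathrm{up}(j))}-\lambda_i^{(\mathrm{low}(j))}}\mathbf 1\{\lambda_i^{(\mathrm{up}(j))}\ge\lambda_i^{(\mathrm{low}(j))}\}\Big]\mathbf 1\{\lambda_1^{(\mathrm{low}(j))}\ge\lambda_2^{(\mathrm{up}(j))}\}.$$ *)

(* Defs.v *)
From HB Require Import structures.
From mathcomp Require Import all_boot all_order all_algebra.
From mathcomp Require Import all_classical all_reals all_analysis.
Set Implicit Arguments. Unset Strict Implicit. Unset Printing Implicit Defensive.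
Import Order.TTheory GRing.Theory Num.Theory.
Local Open Scope ring_scope.

Section GP.
Variables (R : realType) (N : nat).

(* periodic extension: a_n := a_{((n-1) mod N) + 1}, a indexed by 1..N *)
Definition aper (a : nat -> R) (n : int) : R := a (absz ((n - 1) %% N%:Z)%Z).+1.

Definition in_strip (v : int * int) : bool :=
  (0 <= v.2) && (v.2 <= v.1) && (v.1 <= v.2 + N%:Z).

(* p 0, ..., p N are the vertices of the path (values beyond N irrelevant) *)
Definition is_down_right_path (p : nat -> int * int) : Prop :=
  [/\ (p 0%N).1 = (p 0%N).2,
      (forall j, (j <= N)%N -> in_strip (p j)) &
      (forall j, (1 <= j <= N)%N ->
         p j = ((p j.-1).1 + 1, (p j.-1).2) \/ p j = ((p j.-1).1, (p j.-1).2 - 1))].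

Definition horiz (p : nat -> int * int) (j : nat) : bool :=
  (p j).1 == (p j.-1).1 + 1.

Definition label (a : nat -> R) (p : nat -> int * int) (j : nat) : R :=
  if horiz p j then aper a (p j).1 else aper a (p j.-1).2.

Definition up (p : nat -> int * int) (j : nat) : nat := if horiz p j then j else j.-1.
Definition low (p : nat -> int * int) (j : nat) : nat := if horiz p j then j.-1 else j.

(* lam (i, j) stands for lambda_{i+1}^{(j)} *)
Definition lamT := {ffun 'I_2 * 'I_N.+1 -> int}.
Definition L (lam : lamT) (i : 'I_2) (j : nat) : int := lam (i, inord j).

Definition wtGP (a : nat -> R) (c1 c2 : R) (p : nat -> int * int) (lam : lamT) : R :=
  c1 ^ (L lam ord0 0 - L lam 1 0) * c2 ^ (L lam ord0 N - L lam 1 N) *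
  \prod_(1 <= j < N.+1)
    ((\prod_(i < 2)
        (label a p j ^ (L lam i (up p j) - L lam i (low p j)) *
         ((L lam i (low p j) <= L lam i (up p j))%R)%:R)) *
     ((L lam 1 (up p j) <= L lam ord0 (low p j))%R)%:R).

End GP.

(* Main.v *)
Require Import Defs.
From HB Require Import structures.
From mathcomp Require Import all_boot all_order all_algebra.
From mathcomp Require Import all_classical all_reals all_analysis.
From mathcomp Require Import zify ring lra.
Import Order.TTheory GRing.Theory Num.Theory.
Local Open Scope classical_set_scope.
Local Open Scope ring_scope.
Set Implicit Arguments. Unset Strict Implicit. Unset Printing Implicit Defensive.


Section Weights.
Variables (R : realType) (N : nat) (c1 c2 : R).

Definition xv (lam : lamT N) k := L lam ord0 k.
Definition yv (lam : lamT N) k := L lam 1 k.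
Definition uph (h : nat -> bool) (j : nat) : nat := if h j then j else j.-1.
Definition lowh (h : nat -> bool) (j : nat) : nat := if h j then j.-1 else j.

Definition edge (l : R) (u1 u2 l1 l2 : int) : R :=
  l ^ ((u1 + u2) - (l1 + l2)) * ((l1 <= u1) && (l2 <= u2) && (u2 <= l1))%:R.

Definition W (h : nat -> bool) (l : nat -> R) (lam : lamT N) : R :=
  c1 ^ (xv lam 0 - yv lam 0) * c2 ^ (xv lam N - yv lam N) *
  \prod_(1 <= j < N.+1) edge (l j) (xv lam (uph h j)) (yv lam (uph h j))
                                  (xv lam (lowh h j)) (yv lam (lowh h j)).

Lemma bool3 (x1 x2 : R) (b1 b2 b3 : bool) :
  (x1 * b1%:R) * (x2 * b2%:R) * b3%:R = (x1 * x2) * (b1 && b2 && b3)%:R.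
Proof. by case: b1; case: b2; case: b3; rewrite /= ?mulr0 ?mul0r ?mulr1. Qed.

Lemma lift00 : lift ord0 ord0 = 1 :> 'I_2.
Proof. exact/val_inj. Qed.

Lemma wtGP_W a p lam : (forall j, (1 <= j <= N)%N -> label N a p j != 0) ->
  @wtGP R N a c1 c2 p lam = W (horiz p) (label N a p) lam.
Proof.
move=> nz; rewrite /wtGP /W; congr (_ * _).
apply: eq_big_nat => j /nz lnz.
rewrite big_ord_recl big_ord1 lift00 bool3 /edge -expfzDr //.
by congr (_ ^ _ * _); rewrite /xv /yv /uph /lowh /up /low; lia.
Qed.

End Weights.


Lemma esum_bij (R : realType) (T : choiceType) (P Q : set T) (e e' : T -> T) (f g : T -> \bar R) :
  (forall x, P x -> Q (e x)) -> (forall y, Q y -> P (e' y)) ->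
  (forall x, e' (e x) = x) -> (forall y, e (e' y) = y) ->
  (forall x, g (e x) = f x) ->
  \esum_(y in Q) g y = \esum_(x in P) f x.
Proof.
move=> PQ QP K1 K2 gf.
have B : set_bij P Q e.
  split; first by move=> x /PQ.
    by move=> x y _ _ exy; rewrite -(K1 x) exy K1.
  by move=> y Qy; exists (e' y); [exact: QP|exact: K2].
rewrite (reindex_esum P Q e g B).
by apply: eq_esum => x _; rewrite gf.
Qed.

Section Maps.
Variables (R : realType) (N : nat) (c1 c2 : R).

Definition Sl (l0 : int) : set (lamT N) := [set lam : lamT N | lam (ord0, ord0) = l0].

Definition Zf (h : nat -> bool) (l : nat -> R) (l0 : int) : \bar R :=
  \esum_(lam in Sl l0) (W c1 c2 h l lam)%:E.

Definition upd (lam : lamT N) (k : nat) (v1 v2 : int) : lamT N :=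
  [ffun ij => if val ij.2 == k then (if ij.1 == ord0 then v1 else v2) else lam ij].
Definition shiftf (lam : lamT N) (k0 : nat) (d : int) : lamT N :=
  [ffun ij => if (val ij.2 < k0)%N then lam ij else lam ij + d].

Lemma xv_upd lam k v1 v2 j : (j <= N)%N ->
  xv (upd lam k v1 v2) j = if j == k then v1 else xv lam j.
Proof. by move=> jN; rewrite /xv /L ffunE /= inordK. Qed.
Lemma yv_upd lam k v1 v2 j : (j <= N)%N ->
  yv (upd lam k v1 v2) j = if j == k then v2 else yv lam j.
Proof. by move=> jN; rewrite /yv /L ffunE /= inordK. Qed.
Lemma xv_shift lam k0 d j : (j <= N)%N ->
  xv (shiftf lam k0 d) j = if (j < k0)%N then xv lam j else xv lam j + d.
Proof. by move=> jN; rewrite /xv /L ffunE /= inordK. Qed.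
Lemma yv_shift lam k0 d j : (j <= N)%N ->
  yv (shiftf lam k0 d) j = if (j < k0)%N then yv lam j else yv lam j + d.
Proof. by move=> jN; rewrite /yv /L ffunE /= inordK. Qed.

Lemma upd00 lam k v1 v2 : k != 0%N -> upd lam k v1 v2 (ord0, ord0) = lam (ord0, ord0).
Proof. by move=> k0; rewrite ffunE /= eq_sym (negbTE k0). Qed.

Lemma prod2 (F G : nat -> R) j : (1 <= j)%N -> (j.+1 <= N)%N ->
  (forall k, (1 <= k <= N)%N -> k != j -> k != j.+1 -> G k = F k) ->
  G j * G j.+1 = F j * F j.+1 ->
  \prod_(1 <= k < N.+1) G k = \prod_(1 <= k < N.+1) F k.
Proof.
move=> j1 jN GF Gj.
have h2 : (j <= N.+1)%N by lia.
have h3 : (j <= j.+2)%N by lia.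
have h4 : (j.+2 <= N.+1)%N by lia.
rewrite !(@big_cat_nat _ _ _ j 1 N.+1) //=.
rewrite !(@big_cat_nat _ _ _ j.+2 j N.+1) //=.
rewrite !(@big_ltn _ _ _ j j.+2) // !big_nat1 -!mulrA.
rewrite [G j * _]mulrA [F j * _]mulrA Gj.
congr (_ * (_ * _)).
  by apply: eq_big_nat => k kj; apply: GF; lia.
by apply: eq_big_nat => k kj; apply: GF; lia.
Qed.

Lemma mul2b (x y : R) (b1 b2 : bool) : (x * b1%:R) * (y * b2%:R) = (x * y) * (b1 && b2)%:R.
Proof. by case: b1; case: b2; rewrite /= ?mulr0 ?mul0r ?mulr1. Qed.

Lemma edge_shift (l : R) u1 u2 l1 l2 d : edge l (u1 + d) (u2 + d) (l1 + d) (l2 + d) = edge l u1 u2 l1 l2.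
Proof. by rewrite /edge; congr (_ ^ _ * (nat_of_bool _)%:R); lia. Qed.

End Maps.


Section Moves.
Variables (R : realType) (N : nat) (c1 c2 : R).

Lemma upd_upd (lam : lamT N) k a b c d : upd (upd lam k a b) k c d = upd lam k c d.
Proof. by apply/ffunP => -[i q]; rewrite !ffunE /=; case: (val q == k). Qed.

Lemma upd_id (lam : lamT N) k : (k <= N)%N -> upd lam k (xv lam k) (yv lam k) = lam.
Proof.
move=> kN; apply/ffunP => -[i q]; rewrite !ffunE /=; case: ifP => // /eqP qk.
rewrite /xv /yv /L.
have -> : inord k = q by apply/val_inj; rewrite /= inordK.
by case: i => -[|[|]] //= ?; congr (lam (_, _)); apply/val_inj.
Qed.

Lemma shift_shift (lam : lamT N) k0 d d' : d' = - d -> shiftf (shiftf lam k0 d) k0 d' = lam.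
Proof. by move=> ->; apply/ffunP => -[i q]; rewrite !ffunE /=; case: ifP => hq; rewrite ?hq ?addrK. Qed.

Lemma xv0 (lam : lamT N) : xv lam 0 = lam (ord0, ord0).
Proof. by rewrite /xv /L; congr (lam (_, _)); apply/val_inj; rewrite /= inordK. Qed.

Lemma uph_le h k : (k <= N)%N -> (uph h k <= N)%N.
Proof. by rewrite /uph; case: (h k); lia. Qed.
Lemma lowh_le h k : (k <= N)%N -> (lowh h k <= N)%N.
Proof. by rewrite /lowh; case: (h k); lia. Qed.

Lemma W_shift h l (lam : lamT N) d : W c1 c2 h l (shiftf lam 0 d) = W c1 c2 h l lam.
Proof.
rewrite /W !xv_shift // !yv_shift //=; congr (_ ^ _ * _ ^ _ * _); try lia.
apply: eq_big_nat => k /andP[k1 kN].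
by rewrite !xv_shift ?yv_shift ?uph_le ?lowh_le //= edge_shift.
Qed.

Lemma Zf_l0 h l l0 : Zf N c1 c2 h l l0 = Zf N c1 c2 h l 0.
Proof.
apply: (esum_bij (e := fun lam => shiftf lam 0 l0) (e' := fun lam => shiftf lam 0 (- l0))).
- by move=> x; rewrite /Sl /= ffunE /= => ->; rewrite add0r.
- by move=> x; rewrite /Sl /= ffunE /= => ->; rewrite subrr.
- by move=> x; apply: shift_shift; rewrite ?opprK.
- by move=> x; apply: shift_shift; rewrite ?opprK.
- by move=> x; rewrite W_shift.
Qed.

Lemma edge_pair (al be : R) m1 m2 n1 n2 k1 k2 :
  edge be m1 m2 (Num.max m2 n2 + Num.min m1 n1 - k2) (Num.max m1 n1 + Num.min m2 n2 - k1) *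
  edge al n1 n2 (Num.max m2 n2 + Num.min m1 n1 - k2) (Num.max m1 n1 + Num.min m2 n2 - k1) =
  edge al k1 k2 m1 m2 * edge be k1 k2 n1 n2.
Proof.
rewrite /edge !mul2b [be ^ _ * _]mulrC.
congr (al ^ _ * be ^ _ * (nat_of_bool _)%:R); lia.
Qed.

Definition tflip (lam : lamT N) j : lamT N :=
  upd lam j (Num.max (yv lam j.-1) (yv lam j.+1) + Num.min (xv lam j.-1) (xv lam j.+1) - yv lam j)
            (Num.max (xv lam j.-1) (xv lam j.+1) + Num.min (yv lam j.-1) (yv lam j.+1) - xv lam j).
Definition tflip' (lam : lamT N) j : lamT N :=
  upd lam j (Num.max (xv lam j.-1) (xv lam j.+1) + Num.min (yv lam j.-1) (yv lam j.+1) - yv lam j)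
            (Num.max (yv lam j.-1) (yv lam j.+1) + Num.min (xv lam j.-1) (xv lam j.+1) - xv lam j).

Lemma move_int h h' l l' j l0 : (1 <= j)%N -> (j.+1 <= N)%N ->
  h j = true -> h j.+1 = false -> h' j = false -> h' j.+1 = true ->
  l' j = l j.+1 -> l' j.+1 = l j ->
  (forall k, (1 <= k <= N)%N -> k != j -> k != j.+1 -> h' k = h k /\ l' k = l k) ->
  Zf N c1 c2 h' l' l0 = Zf N c1 c2 h l l0.
Proof.
move=> j1 jN hj hj1 h'j h'j1 l'j l'j1 Hk.
have jN' : (j <= N)%N by lia.
have jm : (j.-1 <= N)%N by lia.
have jp : (j.+1 <= N)%N by lia.
have e1 : (j.-1 == j) = false by lia.
have e2 : (j.+1 == j) = false by lia.
apply: (esum_bij (e := tflip^~ j) (e' := tflip'^~ j)).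
- by move=> x; rewrite /Sl /= /tflip upd00 //; lia.
- by move=> x; rewrite /Sl /= /tflip' upd00 //; lia.
- move=> x; rewrite /tflip' /tflip !xv_upd // !yv_upd // e1 e2 eqxx upd_upd.
  rewrite -[RHS](upd_id x jN'); congr (upd _ _ _ _); lia.
- move=> x; rewrite /tflip' /tflip !xv_upd // !yv_upd // e1 e2 eqxx upd_upd.
  rewrite -[RHS](upd_id x jN'); congr (upd _ _ _ _); lia.
move=> x.
have e0 : (0 == j) = false by lia.
have eN : (N == j) = false by lia.
rewrite /W /tflip !xv_upd // !yv_upd // e0 eN.
congr (_%:E); congr (_ * _); apply: (prod2 j1 jN).
  move=> k kN kj kj1; have [hk lk] := Hk k kN kj kj1.
  have kN' : (k <= N)%N by lia.
  have km : (k.-1 <= N)%N by lia.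
  have f1 : (k == j) = false by lia.
  have f2 : (k.-1 == j) = false by lia.
  rewrite /uph /lowh hk lk; case: (h k).
    by rewrite !xv_upd // !yv_upd // f1 f2.
  by rewrite !xv_upd // !yv_upd // f1 f2.
rewrite /uph /lowh hj hj1 h'j h'j1 /= l'j l'j1 !xv_upd // !yv_upd // e1 e2 eqxx.
exact: edge_pair.
Qed.

End Moves.


Section Moves2.
Variables (R : realType) (N : nat) (c1 c2 : R).

Definition sflip (lam : lamT N) : lamT N :=
  shiftf lam 1 ((xv lam 0 + yv lam 0) - (xv lam 1 + yv lam 1)).

Lemma move_start h h' l l' l0 : (1 <= N)%N ->
  h 1%N = false -> h' 1%N = true -> l' 1%N = l 1%N ->
  (forall k, (2 <= k <= N)%N -> h' k = h k /\ l' k = l k) ->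
  Zf N c1 c2 h' l' l0 = Zf N c1 c2 h l l0.
Proof.
move=> N1 h1 h'1 l'1 Hk.
have N1' : (N < 1)%N = false by lia.
apply: (esum_bij (e := sflip) (e' := sflip)).
- by move=> x; rewrite /Sl /sflip /= ffunE.
- by move=> x; rewrite /Sl /sflip /= ffunE.
- move=> x; rewrite {1}/sflip; apply: shift_shift.
  by rewrite !xv_shift // !yv_shift //=; lia.
- move=> x; rewrite {1}/sflip; apply: shift_shift.
  by rewrite !xv_shift // !yv_shift //=; lia.
move=> x; rewrite /W /sflip !xv_shift // !yv_shift //= N1'.
congr (_%:E); congr (_ * _ ^ _ * _); first by lia.
apply: eq_big_nat => k /andP[k1 kN].
case: (eqVneq k 1%N) => [->|k1'].
  rewrite /uph /lowh h1 h'1 l'1 /= !xv_shift // !yv_shift //=.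
  by rewrite /edge; congr (_ ^ _ * (nat_of_bool _)%:R); lia.
have [hk lk] : h' k = h k /\ l' k = l k by apply: Hk; lia.
have kN' : (k <= N)%N by lia.
have km : (k.-1 <= N)%N by lia.
have f1 : (k < 1)%N = false by lia.
have f2 : (k.-1 < 1)%N = false by lia.
rewrite /uph /lowh hk lk; case: (h k).
  by rewrite !xv_shift // !yv_shift // f1 f2 edge_shift.
by rewrite !xv_shift // !yv_shift // f1 f2 edge_shift.
Qed.

Definition eflip (lam : lamT N) : lamT N :=
  upd lam N (xv lam N.-1 + yv lam N.-1 - yv lam N) (xv lam N.-1 + yv lam N.-1 - xv lam N).

Lemma move_end h h' l l' l0 : (1 <= N)%N ->
  h N = true -> h' N = false -> l' N = l N ->
  (forall k, (1 <= k < N)%N -> h' k = h k /\ l' k = l k) ->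
  Zf N c1 c2 h' l' l0 = Zf N c1 c2 h l l0.
Proof.
move=> N1 hN h'N l'N Hk.
have e1 : (N.-1 == N) = false by lia.
have e0 : (0 == N) = false by lia.
have Nm : (N.-1 <= N)%N by lia.
apply: (esum_bij (e := eflip) (e' := eflip)).
- by move=> x; rewrite /Sl /eflip /= upd00 //; lia.
- by move=> x; rewrite /Sl /eflip /= upd00 //; lia.
- move=> x; rewrite {1}/eflip !xv_upd // !yv_upd // e1 eqxx upd_upd.
  rewrite -[RHS](upd_id x (leqnn N)); congr (upd _ _ _ _); lia.
- move=> x; rewrite {1}/eflip !xv_upd // !yv_upd // e1 eqxx upd_upd.
  rewrite -[RHS](upd_id x (leqnn N)); congr (upd _ _ _ _); lia.
move=> x; rewrite /W /eflip !xv_upd // !yv_upd // e0 eqxx.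
congr (_%:E); congr (_ * _ ^ _ * _); first by lia.
apply: eq_big_nat => k /andP[k1 kN].
case: (eqVneq k N) => [->|kN'].
  rewrite /uph /lowh hN h'N l'N /= !xv_upd // !yv_upd // e1 eqxx.
  by rewrite /edge; congr (_ ^ _ * (nat_of_bool _)%:R); lia.
have [hk lk] : h' k = h k /\ l' k = l k by apply: Hk; lia.
have kN2 : (k <= N)%N by lia.
have km : (k.-1 <= N)%N by lia.
have f1 : (k == N) = false by lia.
have f2 : (k.-1 == N) = false by lia.
rewrite /uph /lowh hk lk; case: (h k).
  by rewrite !xv_upd // !yv_upd // f1 f2.
by rewrite !xv_upd // !yv_upd // f1 f2.
Qed.

End Moves2.


Definition Hc (h : nat -> bool) (k : nat) : nat := (\sum_(1 <= i < k.+1) h i)%N.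
Definition mu (N : nat) (h : nat -> bool) : nat := (\sum_(1 <= i < N.+1) (if h i then 0 else i))%N.
Definition labI (m0 : int) (h : nat -> bool) (j : nat) : int :=
  if h j then m0 + (Hc h j)%:Z else m0 - ((j.-1)%:Z - (Hc h j.-1)%:Z).
Definition allH : nat -> bool := fun _ => true.

Lemma sum2 (F G : nat -> nat) j k : (1 <= j)%N -> (j.+1 <= k)%N ->
  (forall i, i != j -> i != j.+1 -> G i = F i) ->
  (\sum_(1 <= i < k.+1) G i + (F j + F j.+1) = \sum_(1 <= i < k.+1) F i + (G j + G j.+1))%N.
Proof.
move=> j1 jk GF.
have h2 : (j <= k.+1)%N by lia.
have h3 : (j <= j.+2)%N by lia.
have h4 : (j.+2 <= k.+1)%N by lia.
rewrite !(@big_cat_nat _ _ _ j 1 k.+1) //=.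
rewrite !(@big_cat_nat _ _ _ j.+2 j k.+1) //=.
rewrite !(@big_ltn _ _ _ j j.+2) // !big_nat1.
rewrite (@eq_big_nat _ _ _ 1 j _ F); last by move=> i ij; apply: GF; lia.
rewrite (@eq_big_nat _ _ _ j.+2 k.+1 _ F); last by move=> i ij; apply: GF; lia.
lia.
Qed.

Lemma sum1 (F G : nat -> nat) k : (1 <= k)%N ->
  (forall i, i != 1%N -> G i = F i) ->
  (\sum_(1 <= i < k.+1) G i + F 1 = \sum_(1 <= i < k.+1) F i + G 1)%N.
Proof.
move=> k1 GF.
rewrite !(@big_ltn _ _ _ 1 k.+1) //.
rewrite (@eq_big_nat _ _ _ 2 k.+1 _ F); last by move=> i ij; apply: GF; lia.
lia.
Qed.

Lemma Hc_ext h h' k : (forall i, (1 <= i <= k)%N -> h' i = h i) -> Hc h' k = Hc h k.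
Proof. by move=> E; apply: eq_big_nat => i /E ->. Qed.

Lemma HcS h k : Hc h k.+1 = (Hc h k + h k.+1)%N.
Proof. by rewrite /Hc big_nat_recr. Qed.

Lemma Hc0 h : Hc h 0 = 0%N.
Proof. by rewrite /Hc big_geq. Qed.

Lemma Hc_allT k : Hc allH k = k.
Proof. by elim: k => [|k IH]; rewrite ?Hc0 // HcS IH addn1. Qed.

Lemma aperN (R : realType) N (a : nat -> R) n : aper N a (n + N%:Z) = aper N a n.
Proof. by rewrite /aper (_ : n + N%:Z - 1 = (n - 1) + N%:Z) ?modzDr //; lia. Qed.

Section Red.
Variables (R : realType) (N : nat) (c1 c2 : R) (a : nat -> R).

Definition Zm h m0 l0 := Zf N c1 c2 h (fun j => aper N a (labI m0 h j)) l0.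

Lemma Zf_ext h h' l l' l0 : (forall k, (1 <= k <= N)%N -> h' k = h k /\ l' k = l k) ->
  Zf N c1 c2 h' l' l0 = Zf N c1 c2 h l l0.
Proof.
move=> E; apply: eq_esum => lam _; congr (_%:E); rewrite /W; congr (_ * _).
by apply: eq_big_nat => k kN; have [hk lk] := E k kN; rewrite /uph /lowh hk lk.
Qed.

Lemma claimA : (0 < N)%N -> forall h m0 l0,
  Zm h m0 l0 = Zm allH (m0 - N%:Z + (Hc h N)%:Z) l0.
Proof.
move=> N0 h; move Hn: (mu N h) => n; elim/ltn_ind: n h Hn => n IH h Hn m0 l0.
case: (boolP [exists j : 'I_N, ~~ h j.+1]) => [/existsP[j0 hj0] | /existsPn hall]; last first.
  have hT : forall k, (1 <= k <= N)%N -> h k = true.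
    move=> k /andP[k1 kN]; have kN1 : (k.-1 < N)%N by lia.
    by have := hall (Ordinal kN1); rewrite /= prednK // => /negPn.
  have HcT : forall k, (k <= N)%N -> Hc h k = k.
    move=> k kN; rewrite -[RHS](Hc_allT k); apply: Hc_ext => i iN; apply: hT; lia.
  rewrite HcT // addrNK /Zm; apply: Zf_ext => k kN; split; first by rewrite hT.
  have kN' : (k <= N)%N by lia.
  have km : (k.-1 <= N)%N by lia.
  by rewrite /labI hT // /allH HcT // Hc_allT.
have ex : exists j, (1 <= j <= N)%N && ~~ h j.
  by exists j0.+1; rewrite hj0 ltn_ord andbT.
case: (ex_minnP ex) => j /andP[/andP[j1 jN] hj] jmin.
have hjf : h j = false by apply/negbTE.
case: (eqVneq j 1%N) => [j_1 | jn1].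
  subst j.
  pose h' := fun i => if i == 1%N then true else h i.
  have GF1 : forall q, q != 1%N -> nat_of_bool (h' q) = nat_of_bool (h q).
    by move=> q /negbTE q1; rewrite /h' q1.
  have GF2 : forall q, q != 1%N -> (if h' q then 0%N else q) = (if h q then 0%N else q).
    by move=> q /negbTE q1; rewrite /h' q1.
  have sH : forall k, (1 <= k)%N -> Hc h' k = (Hc h k + 1)%N.
    move=> k k1; have := @sum1 (fun i => nat_of_bool (h i)) (fun i => nat_of_bool (h' i)) k k1 GF1.
    rewrite /= hjf /h' /= => H; rewrite /Hc; lia.
  have smu : (mu N h' + 1 = mu N h)%N.
    have := @sum1 (fun i => if h i then 0%N else i) (fun i => if h' i then 0%N else i) N N0 GF2.
    rewrite /= hjf /h' /= => H; rewrite /mu; lia.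
  transitivity (Zm h' (m0 - 1) l0).
    symmetry; apply: move_start => //.
    - have h'1 : h' 1%N = true by rewrite /h'.
      by rewrite /labI h'1 hjf sH // HcS Hc0 hjf /=; congr (aper _ _ _); lia.
    - move=> k /andP[k2 kN]; have k1 : (k != 1)%N by lia.
      rewrite /h' (negbTE k1); split=> //.
      have := sH k _; have := sH k.-1 _.
      rewrite /labI /h' (negbTE k1); case: (h k) => H1 H2; congr (aper _ _ _).
        by rewrite H2 //; lia.
      by rewrite H1 //; lia.
  rewrite (IH (mu N h')) //; last by lia.
  by rewrite sH //; congr (Zm _ _ _); lia.
set i := j.-1.
have i1 : (1 <= i)%N by lia.
have ij : j = i.+1 by lia.
have hi : h i = true.
  apply/negPn/negP => hi; have := jmin i; rewrite hi andbT; lia.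
rewrite ij in hjf jN.
pose h' := fun k => if k == i then false else if k == i.+1 then true else h k.
have h'i : h' i = false by rewrite /h' eqxx.
have h'i1 : h' i.+1 = true by rewrite /h' (_ : (i.+1 == i) = false) ?eqxx //; lia.
have hoth : forall k, k != i -> k != i.+1 -> h' k = h k.
  by move=> k /negbTE ki /negbTE ki1; rewrite /h' ki ki1.
have sH : forall k, (i.+1 <= k)%N -> Hc h' k = Hc h k.
  move=> k k1.
  have GF1 : forall q, q != i -> q != i.+1 -> nat_of_bool (h' q) = nat_of_bool (h q).
    by move=> q q1 q2; rewrite hoth.
  have := @sum2 (fun q => nat_of_bool (h q)) (fun q => nat_of_bool (h' q)) i k i1 k1 GF1.
  rewrite /= hi hjf h'i h'i1 => H; rewrite /Hc; lia.
have sL : forall k, (k < i)%N -> Hc h' k = Hc h k.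
  move=> k ki; apply: Hc_ext => q qk; apply: hoth; lia.
have smu : (mu N h' + 1 = mu N h)%N.
  have GF1 : forall q, q != i -> q != i.+1 ->
     (if h' q then 0%N else q) = (if h q then 0%N else q).
    by move=> q q1 q2; rewrite hoth.
  have := @sum2 (fun q => if h q then 0%N else q) (fun q => if h' q then 0%N else q) i N i1 jN GF1.
  rewrite /= hi hjf h'i h'i1 => H; rewrite /mu; lia.
transitivity (Zm h' m0 l0).
  have im : (i.-1 < i)%N by lia.
  have s1 := sL i.-1 im.
  have s2 := HcS h i.-1; rewrite prednK // hi /= in s2.
  have s3 := HcS h i; rewrite hjf /= in s3.
  symmetry; apply: (move_int c1 c2 l0 i1 jN) => //.
  - rewrite /labI h'i hjf /=; congr (aper _ _ _).
    rewrite s1; lia.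
  - rewrite /labI h'i1 hi /=; congr (aper _ _ _).
    rewrite sH //; lia.
  - move=> k /andP[k1 kN] ki ki1; rewrite /labI hoth //; split=> //.
    congr (aper _ _ _); case: (h k).
      case: (ltnP k i) => ki'; first by rewrite sL.
      by rewrite sH //; lia.
    case: (ltnP k.-1 i) => ki'; first by rewrite sL.
    by rewrite sH //; lia.
rewrite (IH (mu N h')) //; last by lia.
by rewrite sH.
Qed.

End Red.


Section Fin.
Variables (R : realType) (N : nat) (c1 c2 : R) (a : nat -> R).

Lemma claimB : (0 < N)%N -> forall m l0,
  Zm N c1 c2 a allH m l0 = Zm N c1 c2 a allH (m - 1) l0.
Proof.
move=> N0 m l0.
pose h' := fun i => if i == N then false else true.
have HcL : forall k, (k < N)%N -> Hc h' k = k.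
  move=> k kN; rewrite -[RHS](Hc_allT k); apply: Hc_ext => i ik.
  by rewrite /h' /allH (_ : (i == N) = false) //; lia.
have HcN : Hc h' N = N.-1.
  have E : N.-1.+1 = N by lia.
  have := HcS h' N.-1; rewrite E => ->.
  rewrite HcL; last by lia.
  by rewrite /h' eqxx addn0.
transitivity (Zm N c1 c2 a h' m l0).
  symmetry; apply: move_end => //.
  - by rewrite /h' eqxx.
  - rewrite /labI /h' eqxx /allH /= Hc_allT HcL; last by lia.
    by rewrite aperN; congr (aper _ _ _); lia.
  - move=> k /andP[k1 kN]; have e : (k == N) = false by lia.
    by rewrite /labI /h' e /allH /= Hc_allT HcL.
rewrite claimA // HcN; congr (Zm _ _ _ _ _ _ _); lia.
Qed.

Lemma allT_const : (0 < N)%N -> forall m l0,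
  Zm N c1 c2 a allH m l0 = Zm N c1 c2 a allH 0 l0.
Proof.
move=> N0 m l0.
have step : forall m, Zm N c1 c2 a allH (m + 1) l0 = Zm N c1 c2 a allH m l0.
  by move=> m'; rewrite claimB // addrK.
have pos : forall n : nat, Zm N c1 c2 a allH n%:Z l0 = Zm N c1 c2 a allH 0 l0.
  by elim=> [//|n IH]; rewrite -IH -(step n%:Z); congr (Zm _ _ _ _ _ _ _); lia.
have neg : forall n : nat, Zm N c1 c2 a allH (- n%:Z) l0 = Zm N c1 c2 a allH 0 l0.
  elim=> [|n IH]; first by rewrite oppr0.
  by rewrite -IH -(step (- n.+1%:Z)); congr (Zm _ _ _ _ _ _ _); lia.
have [->|->] : m = (absz m)%:Z \/ m = - (absz m)%:Z by lia.
  exact: pos.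
exact: neg.
Qed.

Lemma aper_pos n : (0 < N)%N -> (forall i, (1 <= i <= N)%N -> 0 < a i) -> 0 < aper N a n.
Proof.
move=> N0 apos; apply: apos.
have h1 := @modz_ge0 (n - 1) N%:Z; have h2 := @ltz_pmod (n - 1) N%:Z.
have N0' : N%:Z != 0 by lia.
have N0'' : 0 < N%:Z by lia.
move: (h1 N0') (h2 N0''); lia.
Qed.

Lemma path_coords p : is_down_right_path N p -> forall j, (j <= N)%N ->
  p j = ((p 0%N).1 + (Hc (horiz p) j)%:Z, (p 0%N).1 - (j%:Z - (Hc (horiz p) j)%:Z)).
Proof.
case=> p00 _ steps; elim=> [_|j IH jN].
  move: p00; rewrite Hc0; case: (p 0%N) => x y /= ->; congr (_, _); lia.
have := steps j.+1; rewrite jN /= => /(_ isT) [] E.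
  have hz : horiz p j.+1 = true by rewrite /horiz E /= eqxx.
  rewrite E HcS hz IH /=; last by lia.
  by congr (_, _); lia.
have hz : horiz p j.+1 = false by rewrite /horiz E /=; lia.
rewrite E HcS hz IH /=; last by lia.
by congr (_, _); lia.
Qed.

Lemma path_Zm p l0 : (0 < N)%N -> (forall i, (1 <= i <= N)%N -> 0 < a i) ->
  is_down_right_path N p ->
  \esum_(lam in [set lam : lamT N | lam (ord0, ord0) = l0]) (@wtGP R N a c1 c2 p lam)%:E
  = Zm N c1 c2 a allH 0 0.
Proof.
move=> N0 apos P.
have lab : forall j, (1 <= j <= N)%N ->
    label N a p j = aper N a (labI (p 0%N).1 (horiz p) j).
  move=> j /andP[j1 jN]; rewrite /label /labI.
  case: (horiz p j).
    by rewrite (path_coords P jN).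
  by rewrite (path_coords P (_ : j.-1 <= N)%N) //; lia.
transitivity (Zf N c1 c2 (horiz p) (label N a p) l0).
  apply: eq_esum => lam _; rewrite wtGP_W // => j jN.
  by rewrite lab // gt_eqF // aper_pos.
transitivity (Zm N c1 c2 a (horiz p) (p 0%N).1 l0).
  by apply: Zf_ext => k kN; split=> //; rewrite lab.
rewrite claimA // allT_const //.
exact: Zf_l0.
Qed.

End Fin.


Section Bound.
Variables (R : realType).

Lemma powz_le (b c : R) (e : int) : 0 < b -> b <= c -> 0 <= e -> b ^ e <= c ^ e.
Proof.
move=> b0 bc; case: e => // n _.
by rewrite -!exprnP lerXn2r // ?nnegrE ?(ltW b0) // (le_trans (ltW b0)).
Qed.

Lemma key (rho mu l : R) (Yk G V U : int) : 0 < rho -> 0 < mu -> 0 < l ->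
  l <= mu -> mu * l <= rho -> 0 <= V -> 0 <= U ->
  rho ^ Yk * mu ^ (G + V) * l ^ (U + V) <= rho ^ (Yk + V) * mu ^ (G + U).
Proof.
move=> r0 m0 l0 lm ml V0 U0.
rewrite !expfzDr ?gt_eqF //.
have -> : rho ^ Yk * (mu ^ G * mu ^ V) * (l ^ U * l ^ V) =
   (rho ^ Yk * mu ^ G) * ((mu * l) ^ V * l ^ U) by rewrite expfzMl; ring.
have -> : rho ^ Yk * rho ^ V * (mu ^ G * mu ^ U) = (rho ^ Yk * mu ^ G) * (rho ^ V * mu ^ U) by ring.
apply: ler_wpM2l; first by rewrite mulr_ge0 // exprz_ge0 // ltW.
apply: ler_pM.
- by rewrite exprz_ge0 // mulr_ge0 // ltW.
- by rewrite exprz_ge0 // ltW.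
- by apply: powz_le => //; rewrite mulr_gt0.
- exact: powz_le.
Qed.

Definition consC (x y : nat -> int) (j : nat) : bool :=
  (x j.-1 <= x j) && (y j.-1 <= y j) && (y j <= x j.-1).

Definition Qc (c1 : R) (x y : nat -> int) (l : nat -> R) k :=
  c1 ^ (x 0%N - y 0%N) * \prod_(1 <= j < k.+1) edge (l j) (x j) (y j) (x j.-1) (y j.-1).

Lemma chain_bound (c1 rho mu : R) (x y : nat -> int) (l : nat -> R) k :
  0 < c1 -> 0 < rho -> 0 < mu -> c1 <= mu ->
  (forall j, (1 <= j <= k)%N -> 0 < l j /\ l j <= mu /\ mu * l j <= rho) ->
  Qc c1 x y l k = 0 \/ ((forall j, (1 <= j <= k)%N -> consC x y j) /\
            (y 0%N <= x 0%N -> Qc c1 x y l k <= rho ^ (y k - y 0%N) * mu ^ (x k - y k))).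
Proof.
move=> c0 r0 m0 cm; elim: k => [|k IH] Hl.
  right; split; first by move=> j; lia.
  move=> yx; rewrite /Qc big_geq // mulr1 subrr expr0z mul1r.
  by apply: powz_le => //; lia.
have Hl' : forall j, (1 <= j <= k)%N -> 0 < l j /\ l j <= mu /\ mu * l j <= rho.
  by move=> j jk; apply: Hl; lia.
have [lk0 [lkm mlk]] : 0 < l k.+1 /\ l k.+1 <= mu /\ mu * l k.+1 <= rho by apply: Hl; lia.
have QS : Qc c1 x y l k.+1 = Qc c1 x y l k * edge (l k.+1) (x k.+1) (y k.+1) (x k) (y k).
  by rewrite /Qc big_nat_recr //= mulrA.
case: (IH Hl') => [Q0|[Cs B]].
  by left; rewrite QS Q0 mul0r.
case: (boolP (consC x y k.+1)) => C; last first.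
  by left; rewrite QS /edge; move: C; rewrite /consC /= => /negbTE ->; rewrite !mulr0.
right; split.
  by move=> j jk; case: (eqVneq j k.+1) => [->//|jk1]; apply: Cs; lia.
move=> yx; move: (C); rewrite /consC /= => C'.
rewrite QS /edge C' mulr1.
move/andP: C' => [/andP[c_1 c_2] c_3].
apply: (le_trans (ler_wpM2r _ (B yx))); first by rewrite exprz_ge0 // ltW.
have -> : x k - y k = (x k - y k.+1) + (y k.+1 - y k) by ring.
have -> : x k.+1 + y k.+1 - (x k + y k) = (x k.+1 - x k) + (y k.+1 - y k) by ring.
have -> : y k.+1 - y 0%N = (y k - y 0%N) + (y k.+1 - y k) by ring.
have -> : x k.+1 - y k.+1 = (x k - y k.+1) + (x k.+1 - x k) by ring.
apply: key => //; lia.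
Qed.

End Bound.


Lemma mono_int (f : nat -> int) n : (forall j, (1 <= j <= n)%N -> f j.-1 <= f j) ->
  forall i k, (i <= k <= n)%N -> f i <= f k.
Proof.
move=> H i; elim=> [|k IH] ik; first by have -> : i = 0%N by lia.
case: (eqVneq i k.+1) => [->//|ne].
apply: (le_trans (IH _)); first by lia.
by have := H k.+1; rewrite /=; apply; lia.
Qed.

Section WB.
Variables (R : realType) (N : nat) (c1 c2 : R).

Lemma lam_ij (lam : lamT N) (i : 'I_2) (k : 'I_N.+1) :
  lam (i, k) = if i == ord0 then xv lam k else yv lam k.
Proof.
rewrite /xv /yv /L inord_val.
by case: i => -[|[|]] //= ?; congr (lam (_, _)); apply/val_inj.
Qed.

Lemma W_le_G (rho mu tau : R) (l : nat -> R) (lam : lamT N) :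
  (0 < N)%N -> 0 < c1 -> 0 < c2 -> 0 < rho -> 0 < mu -> c1 <= mu -> mu * c2 <= rho ->
  (forall j, (1 <= j <= N)%N -> 0 < l j /\ l j <= mu /\ mu * l j <= rho) ->
  0 < tau -> tau <= 1 -> rho <= tau ^+ (2 * N.+1) ->
  W c1 c2 allH l lam <=
  \prod_(ij : 'I_2 * 'I_N.+1) tau ^+ `|lam ij - lam (ord0, ord0)|%N.
Proof.
move=> N0 c10 c20 r0 m0 cm mc Hl t0 t1 rt.
set x := xv lam; set y := yv lam.
have WQ : W c1 c2 allH l lam = Qc c1 x y l N * c2 ^ (x N - y N).
  by rewrite /W /Qc /uph /lowh /allH /= mulrAC.
have G0 : 0 <= \prod_(ij : 'I_2 * 'I_N.+1) tau ^+ `|lam ij - lam (ord0, ord0)|%N.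
  by apply: prodr_ge0 => ij _; rewrite exprn_ge0 // ltW.
case: (chain_bound x y c10 r0 m0 cm Hl) => [Q0|[Cs B]].
  by rewrite WQ Q0 mul0r.
have xm : forall i k, (i <= k <= N)%N -> x i <= x k.
  apply: mono_int => j /Cs; rewrite /consC => /andP[/andP[]]//.
have ym : forall i k, (i <= k <= N)%N -> y i <= y k.
  apply: mono_int => j /Cs; rewrite /consC => /andP[/andP[]]//.
have yx : forall k, (1 <= k <= N)%N -> y k <= x k.-1.
  by move=> k /Cs; rewrite /consC => /andP[/andP[]]//.
have yx0 : y 0%N <= x 0%N.
  by apply: le_trans (yx 1%N _); [apply: ym|]; clear -N0; lia.
have yxN : y N <= x N.
  apply: le_trans (yx N _) _; first by clear -N0; lia.
  by apply: xm; clear -N0; lia.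
have Wle : W c1 c2 allH l lam <= rho ^ (x N - y 0%N).
  rewrite WQ; apply: le_trans (ler_wpM2r _ (B yx0)) _; first by rewrite exprz_ge0 // ltW.
  rewrite -mulrA -expfzMl.
  apply: le_trans (ler_wpM2l _ (powz_le _ mc _)) _.
  - by rewrite exprz_ge0 // ltW.
  - by rewrite mulr_gt0.
  - by move: yxN; clear; lia.
  by rewrite -expfzDr ?gt_eqF // (_ : y N - y 0%N + (x N - y N) = x N - y 0%N) //; ring.
have x0N : x 0%N <= x N by apply: xm; clear -N0; lia.
set D := absz (x N - y 0%N).
have DE : x N - y 0%N = D%:Z.
  by rewrite /D gez0_abs // subr_ge0 (le_trans yx0 x0N).
apply: (le_trans Wle); rewrite DE -exprnP.
have := @lerXn2r _ D rho (tau ^+ (2 * N.+1)); rewrite !nnegrE.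
move=> /(_ (ltW r0) (exprn_ge0 _ (ltW t0)) rt) H1.
apply: le_trans H1 _.
have cardI : #|{: 'I_2 * 'I_N.+1}| = (2 * N.+1)%N by rewrite card_prod !card_ord.
rewrite -exprM mulnC -cardI exprM -prodr_const.
apply: ler_prod => -[i k] _; apply/andP; split; first by rewrite exprn_ge0 // ltW.
apply: (ler_wiXn2l (ltW t0) t1).
have kN : (k <= N)%N by case: k => /= k; clear; lia.
have xk : x 0%N <= x k by apply: xm; clear -kN; lia.
have xk' : x k <= x N by apply: xm; clear -kN; lia.
have yk : y 0%N <= y k by apply: ym; clear -kN; lia.
have yk' : y k <= y N by apply: ym; clear -kN; lia.
rewrite !lam_ij eqxx /= -/x -/y.
case: (i == ord0); rewrite /D; clear -xk xk' yk yk' yx0 x0N yxN; lia.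
Qed.

End WB.


Section Sums.
Variables (R : realType).

Lemma exists_max (f : nat -> R) n : (0 < n)%N ->
  exists k, (1 <= k <= n)%N /\ forall i, (1 <= i <= n)%N -> f i <= f k.
Proof.
elim: n => [//|n IH] _.
case: (posnP n) => [->|n0].
  by exists 1%N; split=> // i i1; have -> : i = 1%N by lia.
have [k [kn Hk]] := IH n0.
case: (leP (f k) (f n.+1)) => fk.
  exists n.+1; split; first by lia.
  move=> i i1; case: (eqVneq i n.+1) => [->//|ne].
  by apply: le_trans (Hk i _) fk; lia.
exists k; split; first by lia.
move=> i i1; case: (eqVneq i n.+1) => [->|ne]; first exact: ltW.
by apply: Hk; lia.
Qed.

Lemma bernoulli_ineq (e : R) n : 0 <= e -> e <= 1 -> 1 - n%:R * e <= (1 - e) ^+ n.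
Proof.
move=> e0 e1; elim: n => [|n IH]; first by rewrite mul0r subr0 expr0.
rewrite exprS; apply: le_trans (ler_wpM2l _ IH); last by lra.
have : 0 <= n%:R * e * e :> R by rewrite !mulr_ge0 ?ler0n.
rewrite -natr1; nra.
Qed.

Lemma geom_le (t : R) n : 0 <= t -> t < 1 -> \sum_(k < n) t ^+ k <= (1 - t)^-1.
Proof.
move=> t0 t1.
have E : \sum_(k < n) t ^+ k = (1 - t ^+ n) / (1 - t).
  elim: n => [|n IH]; first by rewrite big_ord0 expr0 subrr mul0r.
  rewrite big_ord_recr /= IH exprS; field; lra.
rewrite E ler_pdivrMr ?subr_gt0 // mulVf; last by lra.
by rewrite lerBlDr lerDl exprn_ge0.
Qed.

End Sums.

Section SumBound.
Variables (R : realType) (N : nat).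

Definition G0 (tau : R) (lam : lamT N) : R := \prod_(ij : 'I_2 * 'I_N.+1) tau ^+ `|lam ij|%N.

Lemma sum_G_bound (tau : R) (s : seq (lamT N)) : 0 < tau -> tau < 1 -> uniq s ->
  \sum_(lam <- s) G0 tau lam <= (2 * (1 - tau)^-1) ^+ (2 * N.+1).
Proof.
move=> t0 t1 us.
set M := (\max_(lam <- s) \max_(ij : 'I_2 * 'I_N.+1) `|lam ij|%N)%N.
have HM : forall lam ij, lam \in s -> (`|lam ij| <= M)%N.
  move=> lam ij ls.
  have h1 : (\max_(ij : 'I_2 * 'I_N.+1) `|lam ij|%N <= M)%N.
    rewrite /M; elim: (s) ls => //= l s' IH; rewrite inE big_cons => /orP[/eqP ->|/IH h].
      exact: leq_maxl.
    exact: leq_trans h (leq_maxr _ _).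
  have h2 := leq_bigmax (F := fun ij => `|lam ij|%N) ij.
  exact: leq_trans h2 h1.
pose phi (lam : lamT N) : {ffun 'I_2 * 'I_N.+1 -> bool * 'I_M.+1} :=
  [ffun ij => (lam ij < 0, inord `|lam ij|%N)].
pose H (f : {ffun 'I_2 * 'I_N.+1 -> bool * 'I_M.+1}) : R := \prod_ij tau ^+ (f ij).2.
have GH : forall lam, lam \in s -> G0 tau lam = H (phi lam).
  move=> lam ls; apply: eq_bigr => ij _; rewrite ffunE /= inordK //.
  by rewrite ltnS HM.
have inj : {in s &, injective phi}.
  move=> l1 l2 l1s l2s /ffunP E; apply/ffunP => ij; have := E ij.
  rewrite !ffunE => -[E1 /(congr1 val)]; rewrite /= !inordK ?ltnS ?HM //.
  by move: E1; lia.
rewrite (eq_big_seq (fun lam => H (phi lam))); last by move=> lam /GH.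
rewrite -(big_map phi predT H) big_uniq; last by rewrite map_inj_in_uniq.
apply: (@le_trans _ _ (\sum_f H f)).
  rewrite [X in _ <= X](bigID (fun f => f \in [seq phi i | i <- s])) /= lerDl.
  by apply: sumr_ge0 => f _; apply: prodr_ge0 => ij _; rewrite exprn_ge0 // ltW.
rewrite /H -(bigA_distr_bigA (fun (ij : 'I_2 * 'I_N.+1) (p : bool * 'I_M.+1) => tau ^+ p.2)).
have cardI : #|{: 'I_2 * 'I_N.+1}| = (2 * N.+1)%N by rewrite card_prod !card_ord.
rewrite -cardI -prodr_const; apply: ler_prod => ij _; apply/andP; split.
  by apply: sumr_ge0 => p _; rewrite exprn_ge0 // ltW.
rewrite -(pair_bigA _ (fun (b : bool) (k : 'I_M.+1) => tau ^+ k)) /= big_bool /= mulr2n mulrDl mul1r.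
by apply: lerD; apply: geom_le => //; exact: ltW.
Qed.

End SumBound.


Lemma aper_in (R : realType) N (a : nat -> R) n : (0 < N)%N ->
  exists i, (1 <= i <= N)%N /\ aper N a n = a i.
Proof.
move=> N0; exists (absz ((n - 1) %% N%:Z)%Z).+1; split=> //.
have h1 := @modz_ge0 (n - 1) N%:Z; have h2 := @ltz_pmod (n - 1) N%:Z.
have N0' : N%:Z != 0 by lia.
have N0'' : 0 < N%:Z by lia.
move: (h1 N0') (h2 N0''); lia.
Qed.

Lemma W_ge0 (R : realType) N (c1 c2 : R) h (l : nat -> R) (lam : lamT N) :
  0 < c1 -> 0 < c2 -> (forall j, 0 < l j) -> 0 <= W c1 c2 h l lam.
Proof.
move=> c10 c20 lp; rewrite /W; apply: mulr_ge0; first by apply: mulr_ge0; apply: exprz_ge0; exact: ltW.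
apply: prodr_ge0 => j _; rewrite /edge; apply: mulr_ge0; first by apply: exprz_ge0; exact: ltW.
by rewrite ler0n.
Qed.

Theorem proposition2p15 (R : realType) (N : nat) (a : nat -> R) (c1 c2 : R) :
  (0 < N)%N ->
  (forall i, (1 <= i <= N)%N -> 0 < a i) -> 0 < c1 -> 0 < c2 ->
  (forall i j, (1 <= i <= N)%N -> (1 <= j <= N)%N -> a i * a j < 1) ->
  (forall i, (1 <= i <= N)%N -> a i * c1 < 1) ->
  (forall i, (1 <= i <= N)%N -> a i * c2 < 1) ->
  c1 * c2 < 1 ->
  exists Z : R, forall (p : nat -> int * int), @is_down_right_path N p ->
    forall l0 : int,
      \esum_(lam in [set lam : lamT N | lam (ord0, ord0) = l0])
         (@wtGP R N a c1 c2 p lam)%:E = Z%:E.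
Proof.
move=> N0 apos c10 c20 aa ac1 ac2 cc.
have [k [kN kmax]] := exists_max a N0.
set A := a k.
have A0 : 0 < A by apply: apos.
have AA : A * A < 1 by apply: aa.
have Ac1 : c1 * A < 1 by rewrite mulrC; apply: ac1.
have Ac2 : c2 * A < 1 by rewrite mulrC; apply: ac2.
set rho := Num.max (Num.max (c1 * c2) (c1 * A)) (Num.max (c2 * A) (A * A)).
set mu := Num.max c1 A.
have r1 : rho < 1 by rewrite /rho !gt_max cc Ac1 Ac2 AA.
have rc12 : c1 * c2 <= rho by rewrite /rho !le_max lexx.
have rc1A : c1 * A <= rho by rewrite /rho !le_max lexx !orbT.
have rc2A : c2 * A <= rho by rewrite /rho !le_max lexx !orbT.
have rAA : A * A <= rho by rewrite /rho !le_max lexx !orbT.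
have r0 : 0 < rho by apply: lt_le_trans rc12; rewrite mulr_gt0.
have cm : c1 <= mu by rewrite /mu le_max lexx.
have Am : A <= mu by rewrite /mu le_max lexx orbT.
have m0 : 0 < mu by apply: lt_le_trans cm.
have mc : mu * c2 <= rho.
  by rewrite /mu maxEle; case: ifP => _; [rewrite mulrC|].
have mA : mu * A <= rho.
  by rewrite /mu maxEle; case: ifP => _.
set n := (2 * N.+1)%N.
have n1 : 1 <= n%:R :> R by rewrite ler1n /n muln_gt0.
set e := (1 - rho) / n%:R.
have en : e * n%:R = 1 - rho by rewrite /e mulfVK // gt_eqF // (lt_le_trans _ n1).
have e0 : 0 < e by move: en r1 n1; clear; nra.
have e1 : e <= 1 - rho by move: en e0 n1; clear; nra.
set tau := 1 - e.
have t0 : 0 < tau by rewrite /tau; move: e1 r0; clear; lra.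
have t1 : tau < 1 by rewrite /tau; move: e0; clear; lra.
have rt : rho <= tau ^+ n.
  have e1' : e <= 1 by move: e1 r0; clear; lra.
  have := bernoulli_ineq n (ltW e0) e1'; rewrite /tau.
  by rewrite mulrC en (_ : 1 - (1 - rho) = rho) //; ring.
set l := fun j => aper N a (labI 0 allH j).
have lp : forall j, 0 < l j by move=> j; apply: aper_pos.
have Hl : forall j, (1 <= j <= N)%N -> 0 < l j /\ l j <= mu /\ mu * l j <= rho.
  move=> j _; rewrite /l; have [i [iN ->]] := aper_in a (labI 0 allH j) N0.
  have ai : a i <= A := kmax i iN.
  split; first exact: apos.
  split; first exact: le_trans ai Am.
  by apply: le_trans mA; apply: ler_wpM2l => //; exact: ltW.
have fin : (Zm N c1 c2 a allH 0 0 < +oo)%E.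
  suff B : (Zm N c1 c2 a allH 0 0 <= ((2 * (1 - tau)^-1) ^+ n)%:E)%E.
    exact: le_lt_trans B (ltry _).
  rewrite /Zm /Zf /esum; apply: ge_ereal_sup => _ [F [finF FS] <-].
  rewrite fsbig_finite //= sumEFin lee_fin.
  apply: le_trans (sum_G_bound t0 t1 (finmap.fset_uniq _)).
  rewrite big_seq [X in _ <= X]big_seq; apply: ler_sum => lam lin.
  rewrite in_fset_set // in lin.
  have l00 : lam (ord0, ord0) = 0 by apply: FS; rewrite inE in lin.
  have := W_le_G lam N0 c10 c20 r0 m0 cm mc Hl t0 (ltW t1) rt.
  by rewrite l00; under eq_bigr do rewrite subr0.
have ge0 : (0 <= Zm N c1 c2 a allH 0 0)%E.
  by apply: esum_ge0 => lam _; rewrite lee_fin; apply: W_ge0.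
exists (fine (Zm N c1 c2 a allH 0 0)) => p P l0.
rewrite path_Zm // fineK // ge0_fin_numE //.
Qed.
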